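(* Let $s\in(0,2]$, $P$ a finite set of $n$ points in $(\mathbb{R}^d,\ell_s)$ and $\varepsilon>0$. For any query point $q$, the exact nearest neighbor query procedure described in the context returns a point of $\mathrm{NN}_P(q)$ with high probability.
   Context: $\mathrm{d}$ is the $\ell_s$ distance; $\mathrm{d}(x,P)=\min\{\mathrm{d}(x,p):p\in P\setminus\{x\}\}$; $\mathrm{NN}_P(x)$ is the set of $p\in P\setminus\{x\}$ with $\mathrm{d}(x,p)=\mathrm{d}(x,P)$; $N_P(x,R)$ is the set of $p\in P\setminus\{x\}$ with $\mathrm{d}(x,p)\le R$. Ingredients. (1) An $\varepsilon$-approximate nearest neighbor structure $\mathcal{T}(P,\varepsilon)$ (Har-Peled's tree of locality-sensitive hashing $(r,\varepsilon)$-PLEB structures) which fixes at preprocessing a finite set of candidate radii and, given $q$, outputs one of these radii $r$ satisfying $\mathrm{d}(q,P)\le r\le(1+\varepsilon)\mathrm{d}(q,P)$ with probability at least $1-1/n$. (2) For each candidate radius $r$, a structure $\mathcal{A}'(P,r,\varepsilon)$ which, given $q$, returns a set equal to $N_P(q,r)$ with high probability (it is the lifted locality-sensitive hashing structure for exhaustive $r$-PLEB: lift $P$ to $\mathbb{R}^{d+1}$ with last coordinate $0$, lift $q$ with last coordinate $r/((1+\varepsilon)^s-1)^{1/s}$, and report all lifted data points within distance $r(1+\frac{1}{(1+\varepsilon)^s-1})^{1/s}$ of the lifted query among those colliding with it in hash tables built from $s$-stable hash functions). Query procedure: (1) answer an $\varepsilon$-NN query with $\mathcal{T}(P,\varepsilon)$,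 obtaining $r$; (2) answer the exhaustive $r$-PLEB query with $\mathcal{A}'(P,r,\varepsilon)$, obtaining a set $S$; (3) return the point of $S$ closest to $q$, or an arbitrary point of $P$ if $S=\emptyset$. *)

(* Defs.v *)
From HB Require Import structures.
From mathcomp Require Import all_boot all_order all_algebra.
From mathcomp Require Import all_classical all_reals all_analysis.
Set Implicit Arguments. Unset Strict Implicit. Unset Printing Implicit Defensive.
Import Order.TTheory GRing.Theory Num.Theory.
Local Open Scope classical_set_scope.
Local Open Scope ring_scope.

Section Defs.
Variables (R : realType) (dim : nat).
Notation point := 'rV[R]_dim.

Definition ls_dist (s : R) (x y : point) : R :=
  (\sum_(i < dim) `|x ord0 i - y ord0 i| `^ s) `^ s^-1.

Definition dists (s : R) (P : seq point) (q : point) : seq R :=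
  [seq ls_dist s q p | p <- P & p != q].

Definition dist_to (s : R) (P : seq point) (q : point) : R :=
  \big[Num.min/head 0 (dists s P q)]_(x <- dists s P q) x.

Definition NNset (s : R) (P : seq point) (q : point) : set point :=
  [set p | p \in P /\ p != q /\ ls_dist s q p = dist_to s P q].

Definition Nball (s : R) (P : seq point) (q : point) (r : R) : set point :=
  [set p | p \in P /\ p != q /\ ls_dist s q p <= r].

(* x is a possible answer of step (3) given the set S returned by step (2):
   a point of S closest to q, or an arbitrary point of P if S is empty. *)
Definition step3_output (s : R) (P : seq point) (q : point) (S : set point)
  (x : point) : Prop :=
  (S = set0 /\ x \in P) \/ (S x /\ forall y, S y -> ls_dist s q x <= ls_dist s q y).

End Defs.

(* Main.v *)
Require Import Defs.
From HB Require Import structures.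
From mathcomp Require Import all_boot all_order all_algebra.
From mathcomp Require Import all_classical all_reals all_analysis.
From mathcomp Require Import lra.
Import Order.TTheory GRing.Theory Num.Theory.
Local Open Scope classical_set_scope.
Local Open Scope ring_scope.

Lemma in_bigU (R : realType) (T : Type) (l : seq R) (G : R -> set T) w :
  (\big[setU/set0]_(r <- l) G r) w <-> exists2 r, r \in l & G r w.
Proof.
elim: l => [|r l IH]; rewrite ?big_nil ?big_cons.
  by split; [by [] | by case].
split.
  case=> [Gw|/IH [r' H1 H2]]; first by exists r; rewrite ?mem_head.
  by exists r'; rewrite ?inE ?H1 ?orbT.
case=> r'; rewrite inE => /orP [/eqP->|H] Hg; first by left.
by right; apply/IH; exists r'.
Qed.

Lemma meas_bigU (R : realType) d (T : measurableType d) (l : seq R)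
  (G : R -> set T) :
  (forall r, r \in l -> measurable (G r)) ->
  measurable (\big[setU/set0]_(r <- l) G r).
Proof.
elim: l => [|r l IH] H; rewrite ?big_nil ?big_cons //.
apply: measurableU; first by apply: H; rewrite mem_head.
by apply: IH => r' Hr'; apply: H; rewrite inE Hr' orbT.
Qed.

Lemma pr_bigU (R : realType) d (T : measurableType d) (Pr : probability T R)
  (l : seq R) (G : R -> set T) (f : T -> R) :
  uniq l -> (forall r, r \in l -> measurable (G r)) ->
  (forall r w, G r w -> f w = r) ->
  Pr (\big[setU/set0]_(r <- l) G r) = (\sum_(r <- l) Pr (G r))%E.
Proof.
move=> + + Hf; elim: l => [|r l IH] /= U H; rewrite ?big_nil ?big_cons.
  by rewrite measure0.
move/andP: U => [rl U].
rewrite measureU.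
- have HH : forall r', r' \in l -> measurable (G r').
    by move=> r' Hr'; apply: H; rewrite inE Hr' orbT.
  by rewrite -(IH U HH).
- by apply: H; rewrite mem_head.
- by apply: meas_bigU => r' Hr'; apply: H; rewrite inE Hr' orbT.
apply/seteqP; split => // w [Gw /in_bigU [r' Hr' Gw']].
move: (Hf _ _ Gw) (Hf _ _ Gw') => -> E; subst r'.
by rewrite Hr' in rl.
Qed.

Lemma bigmin_mem {R : realType} (l : seq R) (i : R) :
  \big[Num.min/i]_(x <- l) x \in i :: l.
Proof.
elim: l => [|a l IH]; rewrite ?big_nil ?big_cons ?mem_head //.
set b := \big[_/_]_(_ <- _) _ in IH *.
have [h|h] : Num.min a b = a \/ Num.min a b = b.
  by case: (leP a b) => _; [left|right].
  by rewrite h !inE eqxx orbT.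
rewrite h; rewrite !inE in IH *; by case/orP: IH => ->; rewrite ?orbT.
Qed.

Lemma bigmin_le {R : realType} (l : seq R) (i x : R) :
  x \in l -> \big[Num.min/i]_(y <- l) y <= x.
Proof.
elim: l => [|a l IH] //; rewrite big_cons inE => /orP [/eqP->|H].
  by rewrite ge_min lexx.
by rewrite ge_min IH ?orbT.
Qed.

Lemma dist_props {R : realType} {dim : nat} (s : R) {P : seq 'rV[R]_dim} {q} :
  (exists2 p, p \in P & p != q) ->
  (exists p, [/\ p \in P, p != q & ls_dist s q p = dist_to s P q]) /\
  (forall p, p \in P -> p != q -> dist_to s P q <= ls_dist s q p).
Proof.
case=> p0 Hp0 Hq0.
have Hin : forall p, p \in P -> p != q -> ls_dist s q p \in dists s P q.
  by move=> p Hp Hq; apply/mapP; exists p => //; rewrite mem_filter Hq Hp.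
split; last by move=> p Hp Hq; apply: bigmin_le; apply: Hin.
have : dist_to s P q \in dists s P q.
  have := bigmin_mem (dists s P q) (head 0 (dists s P q) : R).
  rewrite /dist_to inE => /orP [/eqP->|//].
  have := Hin _ Hp0 Hq0; case: (dists s P q) => //= a l _.
  by rewrite mem_head.
case/mapP => p; rewrite mem_filter => /andP [Hq Hp] E.
by exists p; split.
Qed.

Theorem lemma4 (R : realType) (dim : nat) (s eps : R) (P : seq 'rV[R]_dim)
  (q : 'rV[R]_dim)
  (d0 : measure_display) (Omega : measurableType d0) (Pr : probability Omega R)
  (radii : seq R) (rT : Omega -> R) (SA : R -> Omega -> set 'rV[R]_dim)
  (delta : R) :
  0 < s <= 2 -> 0 < eps -> uniq P ->
  (exists2 p, p \in P & p != q) ->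
  (* (1) the eps-NN structure T(P,eps): outputs one of its candidate radii ... *)
  (forall w, rT w \in radii) ->
  (forall r0, r0 \in radii -> measurable [set w | rT w = r0]) ->
  (* ... which is an eps-approximation of d(q,P) with probability >= 1 - 1/n *)
  ((1 - (size P)%:R^-1)%:E <=
     Pr [set w | (dist_to s P q <= rT w <= (1 + eps) * dist_to s P q)%R])%E ->
  (* (2) for each candidate radius r0, A'(P,r0,eps) returns N_P(q,r0) w.h.p. *)
  (forall r0, r0 \in radii ->
     measurable [set w | SA r0 w = Nball s P q r0] /\
     ((1 - delta)%:E <= Pr [set w | SA r0 w = Nball s P q r0])%E) ->
  (* the randomness of T is independent of that of the structures A' *)
  (forall r0, r0 \in radii ->
     Pr ([set w | rT w = r0] `&` [set w | SA r0 w = Nball s P q r0]) =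
     (Pr [set w | rT w = r0] * Pr [set w | SA r0 w = Nball s P q r0])%E) ->
  (* conclusion: the returned point lies in NN_P(q) with probability
     >= 1 - 1/n - delta *)
  exists2 E : set Omega, measurable E /\
    E `<=` [set w | forall x, step3_output s P q (SA (rT w) w) x -> NNset s P q x]
    & ((1 - (size P)%:R^-1 - delta)%:E <= Pr E)%E.
Proof.
move=> _ _ _ Hex Hrad Hmeas HT HA Hind.
have [[ps [Hps Hpsq Hpsd]] Hmin] := dist_props s Hex.
set d := dist_to s P q in Hpsd Hmin HT *.
set rs := undup [seq r <- radii | d <= r].
have Hrs : forall r, r \in rs -> r \in radii /\ d <= r.
  by move=> r; rewrite mem_undup mem_filter => /andP [].
pose G r := [set w | rT w = r] `&` [set w | SA r w = Nball s P q r].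
pose E := \big[setU/set0]_(r <- rs) G r.
have GmE : forall r, r \in rs -> measurable (G r).
  move=> r /Hrs [Hr _]; apply: measurableI; first exact: Hmeas.
  by case: (HA _ Hr).
exists E; first split.
- exact: meas_bigU.
- move=> w /in_bigU [r /Hrs [_ Hdr] [/= Hw HS]] x; rewrite Hw HS.
  have Hps_in : Nball s P q r ps by split; [|split; rewrite // Hpsd].
  case=> [[E0 _]|[[HxP [Hxq Hxd]] Hxm]].
    by rewrite E0 in Hps_in.
  split; first by [].
  split; first by [].
  apply/eqP; rewrite eq_le Hmin // andbT.
  by have := Hxm _ Hps_in; rewrite Hpsd.
have Hnz : exists w : Omega, True.
  apply: contrapT => Hn.
  have : [set: Omega] = set0 by apply/seteqP; split => // w _; apply: Hn; exists w.
  move=> E0; have := probability_setT Pr; rewrite E0 measure0 => /eqP.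
  by rewrite eqe eq_sym oner_eq0.
case: Hnz => w0 _.
have dge0 : 0 <= delta.
  have := HA _ (Hrad w0) => -[Hm Hle].
  have := probability_le1 Pr Hm => H1.
  have := le_trans Hle H1; rewrite lee_fin lerBlDr addrC -lerBlDr subrr.
  by [].
have [dle1|dgt1] := leP delta 1; last first.
  apply: le_trans (measure_ge0 Pr E).
  rewrite lee_fin subr_le0.
  apply: le_trans (_ : 1 <= delta); last exact: ltW.
  by rewrite lerBlDr lerDl invr_ge0.
pose H r := [set w | rT w = r].
have HmH : forall r, r \in rs -> measurable (H r) by move=> r /Hrs [] /Hmeas.
have PE : Pr E = (\sum_(r <- rs) Pr (G r))%E.
  by apply: (@pr_bigU _ _ _ _ _ _ rT); [exact: undup_uniq | exact: GmE | move=> r w [] ].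
have PH : Pr (\big[setU/set0]_(r <- rs) H r) = (\sum_(r <- rs) Pr (H r))%E.
  by apply: (@pr_bigU _ _ _ _ _ _ rT); [exact: undup_uniq | exact: HmH | move=> r w ].
set B := [set w | _] in HT.
have BE : B = \big[setU/set0]_(r <- [seq r <- radii | d <= r <= (1 + eps) * d]) H r.
  apply/seteqP; split => w.
    by move=> Hw; apply/in_bigU; exists (rT w) => //; rewrite mem_filter Hw Hrad.
  by move=> /in_bigU [r]; rewrite mem_filter => /andP [Hc _] Hw; rewrite /B /= Hw.
have HB : (Pr B <= \sum_(r <- rs) Pr (H r))%E.
  rewrite -PH; apply: le_measure.
  - rewrite inE BE; apply: meas_bigU => r; rewrite mem_filter => /andP [_].
    exact: Hmeas.
  - by rewrite inE; apply: meas_bigU.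
  move=> w Hw; apply/in_bigU; exists (rT w) => //.
  by rewrite mem_undup mem_filter Hrad andbT; case/andP: Hw.
rewrite PE.
apply: (@le_trans _ _ ((\sum_(r <- rs) Pr (H r)) * (1 - delta)%:E)%E).
  apply: (@le_trans _ _ ((1 - (size P)%:R^-1)%:E * (1 - delta)%:E)%E).
    rewrite -EFinM lee_fin.
    have : 0 <= (size P)%:R^-1 * delta :> R by rewrite mulr_ge0 // invr_ge0.
    move=> h; rewrite mulrBl mul1r mulrBr mulr1; lra.
  apply: lee_wpmul2r; first by rewrite lee_fin subr_ge0.
  exact: le_trans HT HB.
rewrite ge0_sume_distrl; last by move=> r _; apply: measure_ge0.
rewrite big_seq [X in (_ <= X)%E]big_seq; apply: lee_sum => r Hr.
have [Hr' _] := Hrs r Hr.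
rewrite /G Hind //; apply: lee_wpmul2l; first exact: measure_ge0.
by case: (HA _ Hr').
Qed.
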